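(* Let $\Psi:\Omega_N\to\Omega_N$ be a mixed unitary channel, i.e. $\Psi(\rho)=\sum_i p_iU_i\rho U_i^\dagger$ with $U_i\in\mathrm U(N)$, $p_i\ge0$ and $\sum_ip_i=1$. Then for all $\rho^A,\rho^B\in\Omega_N$, $$T^Q(\Psi(\rho^A),\Psi(\rho^B))\le T^Q(\rho^A,\rho^B).$$
   Context: $\Omega_N$ is the set of $N\times N$ density matrices (Hermitian, positive semidefinite, trace one). Let $S$ be the swap operator on $\mathbb{C}^N\otimes\mathbb{C}^N$, and let $C^Q=\tfrac12(\mathbb{1}-S)$. Let $\Gamma^Q(\rho^A,\rho^B)$ be the set of density matrices $\rho^{AB}$ on $\mathbb{C}^N\otimes\mathbb{C}^N$ with $\operatorname{Tr}_B\rho^{AB}=\rho^A$ and $\operatorname{Tr}_A\rho^{AB}=\rho^B$. Define $$T^Q(\rho^A,\rho^B)=\min_{\rho^{AB}\in\Gamma^Q(\rho^A,\rho^B)}\operatorname{Tr}(C^Q\rho^{AB}).$$ *)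

(* Defs.v *)
From HB Require Import structures.
From mathcomp Require Import all_boot all_order all_algebra.
From mathcomp Require Import complex.
From mathcomp Require Import classical_sets reals.
Set Implicit Arguments. Unset Strict Implicit. Unset Printing Implicit Defensive.
Import Order.TTheory GRing.Theory Num.Theory.
Local Open Scope ring_scope.
Local Open Scope classical_set_scope.

Section QuantumOT.
Variable R : realType.
Local Notation C := R[i].

Definition adj m n (A : 'M[C]_(m, n)) : 'M[C]_(n, m) := (map_mx Num.conj A)^T.

Definition is_density N (rho : 'M[C]_N) : Prop :=
  [/\ adj rho = rho,
      (forall v : 'cV[C]_N, 0 <= (adj v *m rho *m v) 0 0)
    & \tr rho = 1].

(* C^N (x) C^N is identified with C^(N*N); the basis vector |i>|k> has
   index mxvec_index i k. *)

Definition ptraceB N (rho : 'M[C]_(N * N)) : 'M[C]_N :=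
  \matrix_(i, j) \sum_(k < N) rho (mxvec_index i k) (mxvec_index j k).
Definition ptraceA N (rho : 'M[C]_(N * N)) : 'M[C]_N :=
  \matrix_(k, l) \sum_(i < N) rho (mxvec_index i k) (mxvec_index i l).

Definition swap_op N : 'M[C]_(N * N) :=
  \sum_(i < N) \sum_(j < N) delta_mx (mxvec_index j i) (mxvec_index i j).

Definition CQ N : 'M[C]_(N * N) := 2^-1 *: (1%:M - swap_op N).

Definition couplings N (rhoA rhoB : 'M[C]_N) : set 'M[C]_(N * N) :=
  [set rhoAB | is_density rhoAB /\ ptraceB rhoAB = rhoA /\ ptraceA rhoAB = rhoB].

(* T^Q(rhoA, rhoB) = min over couplings of Tr(C^Q rhoAB); the trace is real
   for density matrices, we take its real part and the infimum (which is
   attained, so it equals the minimum of the paper). *)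
Definition TQ N (rhoA rhoB : 'M[C]_N) : R :=
  inf [set complex.Re (\tr (CQ N *m rhoAB)) | rhoAB in couplings rhoA rhoB].

Definition unitary N (U : 'M[C]_N) : Prop := U *m adj U = 1%:M.

Definition mixed_unitary N n (p : 'I_n -> R) (U : 'I_n -> 'M[C]_N)
  (rho : 'M[C]_N) : 'M[C]_N :=
  \sum_(i < n) (real_complex R (p i)) *: (U i *m rho *m adj (U i)).

End QuantumOT.

(* Main.v *)
Require Import Defs.
From HB Require Import structures.
From mathcomp Require Import all_boot all_order all_algebra.
From mathcomp Require Import complex.
From mathcomp Require Import classical_sets reals.
From mathcomp Require Import ring.
From mathcomp Require spectral.
Set Implicit Arguments. Unset Strict Implicit. Unset Printing Implicit Defensive.
Import Order.TTheory GRing.Theory Num.Theory.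
Local Open Scope ring_scope.

Section S.
Variable R : realType.
Local Notation C := R[i].
Variable N : nat.

Definition idx1 (a : 'I_(N * N)) : 'I_N :=
  (enum_val (cast_ord (esym (mxvec_cast N N)) a)).1.
Definition idx2 (a : 'I_(N * N)) : 'I_N :=
  (enum_val (cast_ord (esym (mxvec_cast N N)) a)).2.
Lemma idx1E i j : idx1 (mxvec_index i j) = i.
Proof. by rewrite /idx1 /mxvec_index cast_ordK enum_rankK. Qed.
Lemma idx2E i j : idx2 (mxvec_index i j) = j.
Proof. by rewrite /idx2 /mxvec_index cast_ordK enum_rankK. Qed.

Lemma mxvec_index_eq (i j k l : 'I_N) :
  (mxvec_index i j == mxvec_index k l) = (i == k) && (j == l).
Proof.
apply/idP/idP => [/eqP E|/andP[/eqP-> /eqP->]] //.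
apply/andP; split; apply/eqP;
  [by rewrite -(idx1E i j) E idx1E | by rewrite -(idx2E i j) E idx2E].
Qed.

Lemma sum_pair (V : nmodType) (F : 'I_(N * N) -> V) :
  \sum_a F a = \sum_i \sum_k F (mxvec_index i k).
Proof.
rewrite pair_big /=.
rewrite (reindex (uncurry (@mxvec_index N N))) /=; last first.
  by apply: onW_bij; exists (fun a => (idx1 a, idx2 a)) => [[i j]|a] /=;
   [rewrite idx1E idx2E | case/mxvec_indexP: a => i j; rewrite idx1E idx2E].
by apply: eq_bigr => -[i j].
Qed.

Definition kron (A B : 'M[C]_N) : 'M[C]_(N * N) :=
  \matrix_(a, b) (A (idx1 a) (idx1 b) * B (idx2 a) (idx2 b)).

Lemma kronE A B i k j l :
  kron A B (mxvec_index i k) (mxvec_index j l) = A i j * B k l.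
Proof. by rewrite mxE !idx1E !idx2E. Qed.

Lemma sum_delta (k : 'I_N) (f : 'I_N -> C) :
  \sum_b ((k == b)%:R * f b) = f k.
Proof.
rewrite (bigD1 k) //= eqxx mul1r big1 ?addr0 // => b.
by rewrite eq_sym => /negbTE ->; rewrite mul0r.
Qed.
Lemma sum_deltar (k : 'I_N) (f : 'I_N -> C) :
  \sum_b (f b * (b == k)%:R) = f k.
Proof.
rewrite (bigD1 k) //= eqxx mulr1 big1 ?addr0 // => b.
by move=> /negbTE ->; rewrite mulr0.
Qed.

Lemma mulmx_pair m n (A : 'M[C]_(m, N * N)) (B : 'M[C]_(N * N, n)) x y :
  (A *m B) x y = \sum_i \sum_k A x (mxvec_index i k) * B (mxvec_index i k) y.
Proof. by rewrite mxE sum_pair. Qed.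

Lemma kron_mul A B C' D :
  kron A B *m kron C' D = kron (A *m C') (B *m D).
Proof.
apply/matrixP => x y; case/mxvec_indexP: x => i k; case/mxvec_indexP: y => j l.
rewrite mulmx_pair kronE !mxE big_distrl /=; apply: eq_bigr => a _.
rewrite big_distrr /=; apply: eq_bigr => b _.
by rewrite !kronE mulrACA.
Qed.

Lemma kron11 : kron 1%:M 1%:M = 1%:M.
Proof.
apply/matrixP => x y; case/mxvec_indexP: x => i k; case/mxvec_indexP: y => j l.
rewrite kronE !mxE mxvec_index_eq.
by case: (i == j); case: (k == l); rewrite ?mulr1n ?mulr0n ?mulr1 ?mulr0.
Qed.

Lemma adj_mul m n p (A : 'M[C]_(m, n)) (B : 'M[C]_(n, p)) :
  adj (A *m B) = adj B *m adj A.
Proof. by rewrite /adj map_mxM trmx_mul. Qed.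

Lemma adjK m n (A : 'M[C]_(m, n)) : adj (adj A) = A.
Proof. by apply/matrixP => i j; rewrite !mxE conjCK. Qed.

Lemma adj_kron A B : adj (kron A B) = kron (adj A) (adj B).
Proof.
apply/matrixP => x y; case/mxvec_indexP: x => i k; case/mxvec_indexP: y => j l.
by rewrite kronE !mxE !idx1E !idx2E rmorphM.
Qed.

Lemma adj1 n : adj (1%:M : 'M[C]_n) = 1%:M.
Proof. by rewrite /adj map_mx1 trmx1. Qed.

Lemma adjD m n (A B : 'M[C]_(m, n)) : adj (A + B) = adj A + adj B.
Proof. by apply/matrixP => i j; rewrite !mxE rmorphD. Qed.

Lemma adj_sum m n I (r : seq I) (F : I -> 'M[C]_(m, n)) :
  adj (\sum_(i <- r) F i) = \sum_(i <- r) adj (F i).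
Proof.
elim: r => [|a r IH]; first by rewrite !big_nil; apply/matrixP => i j; rewrite !mxE rmorph0.
by rewrite !big_cons adjD IH.
Qed.

Lemma conj_real (x : R) : Num.conj (real_complex R x) = real_complex R x.
Proof.
apply: conj_Creal; rewrite realE; apply/orP.
case: (lerP 0 x) => h; [left; by rewrite ler0c | right].
by rewrite (lecR x 0) ltW.
Qed.

Lemma adjZr m n (x : R) (A : 'M[C]_(m, n)) :
  adj (real_complex R x *: A) = real_complex R x *: adj A.
Proof. by apply/matrixP => i j; rewrite !mxE rmorphM /= conj_real. Qed.

Lemma sum_only (k : 'I_N) (F : 'I_N -> C) :
  (forall b, b != k -> F b = 0) -> \sum_b F b = F k.
Proof. by move=> H; rewrite (bigD1 k) //= big1 ?addr0. Qed.

Lemma id_mxE (k b : 'I_N) : (1%:M : 'M[C]_N) k b = (k == b)%:R.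
Proof. by rewrite mxE. Qed.

Lemma id_mx0 (k b : 'I_N) : b != k -> (1%:M : 'M[C]_N) k b = 0.
Proof. by rewrite mxE eq_sym => /negbTE ->. Qed.
Lemma id_mx0' (k b : 'I_N) : b != k -> (1%:M : 'M[C]_N) b k = 0.
Proof. by rewrite mxE => /negbTE ->. Qed.
Lemma id_mx1 (k : 'I_N) : (1%:M : 'M[C]_N) k k = 1.
Proof. by rewrite mxE eqxx. Qed.

Lemma kron_mulmxE A B (M : 'M[C]_(N * N)) i k y :
  (kron A B *m M) (mxvec_index i k) y =
  \sum_a \sum_b A i a * B k b * M (mxvec_index a b) y.
Proof. by rewrite mulmx_pair; apply: eq_bigr => a _; apply: eq_bigr => b _; rewrite kronE. Qed.

Lemma mulmx_kronE A B (M : 'M[C]_(N * N)) x j l :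
  (M *m kron A B) x (mxvec_index j l) =
  \sum_a \sum_b M x (mxvec_index a b) * (A a j * B b l).
Proof. by rewrite mulmx_pair; apply: eq_bigr => a _; apply: eq_bigr => b _; rewrite kronE. Qed.

Lemma ptB_kronl A (M : 'M[C]_(N * N)) :
  ptraceB (kron A 1%:M *m M) = A *m ptraceB M.
Proof.
apply/matrixP => i j; rewrite [LHS]mxE mxE.
under eq_bigr => k _ do rewrite kron_mulmxE.
under eq_bigr => k _ do under eq_bigr => a _ do
  (rewrite (@sum_only k); last by move=> b hb; rewrite id_mx0 // mulr0 mul0r).
under eq_bigr => k _ do under eq_bigr => a _ do rewrite id_mx1 mulr1.
by rewrite exchange_big /=; apply: eq_bigr => a _; rewrite mxE big_distrr /=.
Qed.

Lemma ptB_kronl_r A (M : 'M[C]_(N * N)) :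
  ptraceB (M *m kron A 1%:M) = ptraceB M *m A.
Proof.
apply/matrixP => i j; rewrite [LHS]mxE mxE.
under eq_bigr => k _ do rewrite mulmx_kronE.
under eq_bigr => k _ do under eq_bigr => a _ do
  (rewrite (@sum_only k); last by move=> b hb; rewrite id_mx0' // !mulr0).
under eq_bigr => k _ do under eq_bigr => a _ do rewrite id_mx1 mulr1.
by rewrite exchange_big /=; apply: eq_bigr => a _; rewrite mxE big_distrl /=.
Qed.

Lemma ptB_kronr_cyc B (M : 'M[C]_(N * N)) :
  ptraceB (kron 1%:M B *m M) = ptraceB (M *m kron 1%:M B).
Proof.
apply/matrixP => i j; rewrite !mxE.
under eq_bigr => k _ do rewrite kron_mulmxE.
under [RHS]eq_bigr => k _ do rewrite mulmx_kronE.
under eq_bigr => k _ do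
  (rewrite (@sum_only i); last by move=> a ha; rewrite big1 // => b _; rewrite id_mx0 // !mul0r).
under [RHS]eq_bigr => k _ do
  (rewrite (@sum_only j); last by move=> a ha; rewrite big1 // => b _; rewrite id_mx0' // mul0r mulr0).
rewrite [RHS]exchange_big /=; apply: eq_bigr => k _; apply: eq_bigr => b _.
by rewrite !id_mx1 mul1r mulrC.
Qed.

Lemma ptA_kronr B (M : 'M[C]_(N * N)) :
  ptraceA (kron 1%:M B *m M) = B *m ptraceA M.
Proof.
apply/matrixP => k l; rewrite [LHS]mxE mxE.
under eq_bigr => i _ do rewrite kron_mulmxE.
under eq_bigr => i _ do
  (rewrite (@sum_only i); last by move=> a ha; rewrite big1 // => b _; rewrite id_mx0 // !mul0r).
under eq_bigr => i _ do under eq_bigr => b _ do rewrite id_mx1 mul1r.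
by rewrite exchange_big /=; apply: eq_bigr => b _; rewrite mxE big_distrr /=.
Qed.

Lemma ptA_kronr_r B (M : 'M[C]_(N * N)) :
  ptraceA (M *m kron 1%:M B) = ptraceA M *m B.
Proof.
apply/matrixP => k l; rewrite [LHS]mxE mxE.
under eq_bigr => i _ do rewrite mulmx_kronE.
under eq_bigr => i _ do
  (rewrite (@sum_only i); last by move=> a ha; rewrite big1 // => b _; rewrite id_mx0' // mul0r mulr0).
under eq_bigr => i _ do under eq_bigr => b _ do rewrite id_mx1 mul1r.
by rewrite exchange_big /=; apply: eq_bigr => b _; rewrite mxE big_distrl /=.
Qed.

Lemma ptA_kronl_cyc A (M : 'M[C]_(N * N)) :
  ptraceA (kron A 1%:M *m M) = ptraceA (M *m kron A 1%:M).
Proof.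
apply/matrixP => k l; rewrite !mxE.
under eq_bigr => i _ do rewrite kron_mulmxE.
under [RHS]eq_bigr => i _ do rewrite mulmx_kronE.
under eq_bigr => i _ do under eq_bigr => a _ do
  (rewrite (@sum_only k); last by move=> b hb; rewrite id_mx0 // mulr0 mul0r).
under [RHS]eq_bigr => i _ do under eq_bigr => a _ do
  (rewrite (@sum_only l); last by move=> b hb; rewrite id_mx0' // !mulr0).
rewrite [RHS]exchange_big /=; apply: eq_bigr => i _; apply: eq_bigr => a _.
by rewrite !id_mx1 !mulr1 mulrC.
Qed.

Lemma ptB_conj U (M : 'M[C]_(N * N)) : adj U *m U = 1%:M ->
  ptraceB (kron U U *m M *m adj (kron U U)) = U *m ptraceB M *m adj U.
Proof.
move=> hU.
have e1 : kron U U = kron U 1%:M *m kron 1%:M U by rewrite kron_mul mulmx1 mul1mx.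
have e2 : kron (adj U) (adj U) = kron 1%:M (adj U) *m kron (adj U) 1%:M
  by rewrite kron_mul mulmx1 mul1mx.
rewrite adj_kron e1 e2 !mulmxA ptB_kronl_r -!mulmxA ptB_kronl ptB_kronr_cyc.
by rewrite -[M *m _ *m _]mulmxA kron_mul mul1mx hU kron11 mulmx1 mulmxA.
Qed.

Lemma ptA_conj U (M : 'M[C]_(N * N)) : adj U *m U = 1%:M ->
  ptraceA (kron U U *m M *m adj (kron U U)) = U *m ptraceA M *m adj U.
Proof.
move=> hU.
have e1 : kron U U = kron 1%:M U *m kron U 1%:M by rewrite kron_mul mulmx1 mul1mx.
have e2 : kron (adj U) (adj U) = kron (adj U) 1%:M *m kron 1%:M (adj U)
  by rewrite kron_mul mulmx1 mul1mx.
rewrite adj_kron e1 e2 !mulmxA ptA_kronr_r -!mulmxA ptA_kronr ptA_kronl_cyc.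
by rewrite -[M *m _ *m _]mulmxA kron_mul mul1mx hU kron11 mulmx1 mulmxA.
Qed.

Lemma swapE a b c d : swap_op R N (mxvec_index a b) (mxvec_index c d) =
  ((a == d) && (b == c))%:R.
Proof.
rewrite /swap_op summxE; under eq_bigr do rewrite summxE.
under eq_bigr do under eq_bigr do rewrite mxE !mxvec_index_eq.
rewrite (@sum_only b); last first.
  move=> i hi; rewrite big1 // => j _.
  by rewrite eq_sym in hi; rewrite (negbTE hi) andbF andFb.
rewrite (@sum_only a); last first.
  by move=> j hj; rewrite eq_sym in hj; rewrite (negbTE hj) andFb.
by rewrite !eqxx /= (eq_sym a d) (eq_sym b c) andbC.
Qed.

Lemma swap_mulE (M : 'M[C]_(N * N)) a b y :
  (swap_op R N *m M) (mxvec_index a b) y = M (mxvec_index b a) y.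
Proof.
rewrite mulmx_pair.
under eq_bigr do under eq_bigr do rewrite swapE.
rewrite (@sum_only b); last first.
  move=> c hc; rewrite big1 // => d _.
  by rewrite eq_sym in hc; rewrite (negbTE hc) andbF mul0r.
rewrite (@sum_only a); last first.
  by move=> d hd; rewrite eq_sym (negbTE hd) mul0r.
by rewrite !eqxx mul1r.
Qed.

Lemma mul_swapE (M : 'M[C]_(N * N)) x c d :
  (M *m swap_op R N) x (mxvec_index c d) = M x (mxvec_index d c).
Proof.
rewrite mulmx_pair.
under eq_bigr do under eq_bigr do rewrite swapE.
rewrite (@sum_only d); last first.
  move=> a ha; rewrite big1 // => b _.
  by rewrite (negbTE ha) andFb mulr0.
rewrite (@sum_only c); last first.
  by move=> b hb; rewrite (negbTE hb) andbF mulr0.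
by rewrite !eqxx mulr1.
Qed.

Lemma swap_kron A B : swap_op R N *m kron A B = kron B A *m swap_op R N.
Proof.
apply/matrixP => x y; case/mxvec_indexP: x => a b; case/mxvec_indexP: y => c d.
by rewrite swap_mulE mul_swapE !kronE mulrC.
Qed.

Lemma CQ_kron U : CQ R N *m kron U U = kron U U *m CQ R N.
Proof.
by rewrite /CQ -scalemxAl -scalemxAr mulmxBl mulmxBr mul1mx mulmx1 swap_kron.
Qed.

Lemma tr_CQ_conj U (M : 'M[C]_(N * N)) : adj U *m U = 1%:M ->
  \tr (CQ R N *m (kron U U *m M *m adj (kron U U))) = \tr (CQ R N *m M).
Proof.
move=> hU; rewrite mulmxA mulmxA mxtrace_mulC !mulmxA -[adj _ *m _ *m _]mulmxA CQ_kron.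
by rewrite mulmxA adj_kron kron_mul hU kron11 mul1mx.
Qed.

Lemma trace_pair (M : 'M[C]_(N * N)) :
  \tr M = \sum_a \sum_b M (mxvec_index a b) (mxvec_index a b).
Proof. by rewrite /mxtrace sum_pair. Qed.

Lemma tr_swap (M : 'M[C]_(N * N)) :
  \tr (swap_op R N *m M) = \sum_a \sum_b M (mxvec_index b a) (mxvec_index a b).
Proof. by rewrite trace_pair; under eq_bigr do under eq_bigr do rewrite swap_mulE. Qed.

Definition wv (a b : 'I_N) : 'cV[C]_(N * N) :=
  delta_mx (mxvec_index a b) 0 - delta_mx (mxvec_index b a) 0.

Lemma adj_delta (x : 'I_(N * N)) :
  adj (delta_mx x 0 : 'cV[C]_(N * N)) = delta_mx 0 x.
Proof. by apply/matrixP => i j; rewrite !mxE rmorph_nat andbC. Qed.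

Lemma adjN m n (A : 'M[C]_(m, n)) : adj (- A) = - adj A.
Proof. by apply/matrixP => i j; rewrite !mxE rmorphN. Qed.

Lemma dd_entry (M : 'M[C]_(N * N)) x y :
  ((delta_mx 0 x : 'rV[C]_(N * N)) *m M *m (delta_mx y 0 : 'cV[C]_(N * N))) 0 0 = M x y.
Proof. by rewrite -rowE -colE !mxE. Qed.

Lemma subE m n (A B : 'M[C]_(m, n)) i j : (A - B) i j = A i j - B i j.
Proof. by rewrite !mxE. Qed.

Lemma quad_wv (M : 'M[C]_(N * N)) a b :
  (adj (wv a b) *m M *m wv a b) 0 0 =
  M (mxvec_index a b) (mxvec_index a b) - M (mxvec_index a b) (mxvec_index b a)
  - M (mxvec_index b a) (mxvec_index a b) + M (mxvec_index b a) (mxvec_index b a).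
Proof.
rewrite /wv adjD adjN !adj_delta mulmxDl mulNmx !mulmxDr !mulmxN.
rewrite !mulmxBl !subE !dd_entry; ring.
Qed.

Lemma sum_quad (M : 'M[C]_(N * N)) :
  \sum_a \sum_b (adj (wv a b) *m M *m wv a b) 0 0 =
  (\tr M - \tr (swap_op R N *m M)) * 2.
Proof.
rewrite tr_swap trace_pair.
under eq_bigr do under eq_bigr do rewrite quad_wv.
under eq_bigr do rewrite !(big_split, sumrB) /=.
rewrite !(big_split, sumrB) /=.
have hN : forall F : 'I_N -> 'I_N -> C,
    \sum_i \sum_j - F i j = - \sum_i \sum_j F i j.
  by move=> F; rewrite -sumrN; apply: eq_bigr => i _; rewrite sumrN.
rewrite [X in _ + X + _ + _]exchange_big [X in _ + X]exchange_big /=.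
rewrite !hN; ring.
Qed.

Lemma tr_CQ (M : 'M[C]_(N * N)) :
  \tr (CQ R N *m M) = 2^-1 * (\tr M - \tr (swap_op R N *m M)).
Proof. by rewrite /CQ -scalemxAl mxtraceZ mulmxBl mul1mx linearB. Qed.

Lemma tr_CQ_ge0 (M : 'M[C]_(N * N)) : is_density M ->
  0 <= complex.Re (\tr (CQ R N *m M)).
Proof.
case=> _ hpsd _.
have h : 0 <= \tr (CQ R N *m M).
  rewrite tr_CQ; apply: mulr_ge0; first by rewrite invr_ge0 ler0n.
  have : 0 <= (\tr M - \tr (swap_op R N *m M)) * 2.
    by rewrite -sum_quad; apply: sumr_ge0 => a _; apply: sumr_ge0 => b _.
  by rewrite pmulr_lge0 // ltr0n.
by move: h; rewrite lecE => /andP[_].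
Qed.

Lemma unitary_adj (U : 'M[C]_N) : unitary U -> adj U *m U = 1%:M.
Proof. by move=> h; apply: mulmx1C. Qed.

Lemma kron_unitary (U : 'M[C]_N) : unitary U ->
  adj (kron U U) *m kron U U = 1%:M.
Proof. by move=> h; rewrite adj_kron kron_mul unitary_adj // kron11. Qed.

Lemma tr_conj (W M : 'M[C]_(N * N)) : adj W *m W = 1%:M ->
  \tr (W *m M *m adj W) = \tr M.
Proof. by move=> h; rewrite mxtrace_mulC mulmxA h mul1mx. Qed.

Definition Phi n (p : 'I_n -> R) (U : 'I_n -> 'M[C]_N) (M : 'M[C]_(N * N)) :=
  \sum_(i < n) real_complex R (p i) *: (kron (U i) (U i) *m M *m adj (kron (U i) (U i))).

Lemma ptB_lin n (c : 'I_n -> C) (X : 'I_n -> 'M[C]_(N * N)) :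
  ptraceB (\sum_i c i *: X i) = \sum_i c i *: ptraceB (X i).
Proof.
apply/matrixP => i j; rewrite !mxE summxE.
under eq_bigr do rewrite summxE.
rewrite exchange_big /=; apply: eq_bigr => l _; rewrite !mxE big_distrr /=.
by apply: eq_bigr => k _; rewrite mxE.
Qed.

Lemma ptA_lin n (c : 'I_n -> C) (X : 'I_n -> 'M[C]_(N * N)) :
  ptraceA (\sum_i c i *: X i) = \sum_i c i *: ptraceA (X i).
Proof.
apply/matrixP => i j; rewrite !mxE summxE.
under eq_bigr do rewrite summxE.
rewrite exchange_big /=; apply: eq_bigr => l _; rewrite !mxE big_distrr /=.
by apply: eq_bigr => k _; rewrite mxE.
Qed.

Section PhiS.
Variables (n : nat) (p : 'I_n -> R) (U : 'I_n -> 'M[C]_N).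
Hypothesis hp : forall i, 0 <= p i.
Hypothesis hsum : \sum_(i < n) p i = 1.
Hypothesis hU : forall i, unitary (U i).

Lemma Phi_ptB M : ptraceB (Phi p U M) = mixed_unitary p U (ptraceB M).
Proof. by rewrite /Phi ptB_lin; apply: eq_bigr => i _; rewrite ptB_conj // unitary_adj. Qed.

Lemma Phi_ptA M : ptraceA (Phi p U M) = mixed_unitary p U (ptraceA M).
Proof. by rewrite /Phi ptA_lin; apply: eq_bigr => i _; rewrite ptA_conj // unitary_adj. Qed.

Lemma sum_pC : \sum_(i < n) real_complex R (p i) = 1.
Proof. by rewrite -rmorph_sum hsum rmorph1. Qed.

Lemma Phi_density M : is_density M -> is_density (Phi p U M).
Proof.
case=> hM hpsd htr; split.
- rewrite /Phi adj_sum; apply: eq_bigr => i _.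
  by rewrite adjZr !adj_mul adjK hM mulmxA.
- move=> v; rewrite /Phi mulmx_sumr mulmx_suml summxE.
  apply: sumr_ge0 => i _; rewrite -scalemxAr -scalemxAl mxE.
  apply: mulr_ge0; first by rewrite ler0c.
  have -> : adj v *m (kron (U i) (U i) *m M *m adj (kron (U i) (U i))) *m v =
    adj (adj (kron (U i) (U i)) *m v) *m M *m (adj (kron (U i) (U i)) *m v).
    by rewrite adj_mul adjK !mulmxA.
  exact: hpsd.
- rewrite /Phi linear_sum /=.
  under eq_bigr do rewrite linearZ /= tr_conj ?kron_unitary // htr mulr1.
  exact: sum_pC.
Qed.

Lemma Phi_CQ M : \tr (CQ R N *m Phi p U M) = \tr (CQ R N *m M).
Proof.
rewrite /Phi mulmx_sumr linear_sum /=.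
under eq_bigr do rewrite -scalemxAr linearZ /= tr_CQ_conj ?unitary_adj //.
by rewrite -big_distrl /= sum_pC mul1r.
Qed.
End PhiS.

Lemma ptB_kron A B : ptraceB (kron A B) = \tr B *: A.
Proof.
apply/matrixP => i j; rewrite !mxE.
under eq_bigr do rewrite kronE.
by rewrite -big_distrr /= mulrC.
Qed.

Lemma ptA_kron A B : ptraceA (kron A B) = \tr A *: B.
Proof.
apply/matrixP => k l; rewrite !mxE.
under eq_bigr do rewrite kronE.
by rewrite -big_distrl.
Qed.

Lemma tr_kron A B : \tr (kron A B) = \tr A * \tr B.
Proof.
rewrite trace_pair /mxtrace big_distrl /=; apply: eq_bigr => i _.
by rewrite big_distrr /=; apply: eq_bigr => k _; rewrite kronE.
Qed.

Lemma kron_diag0 A (d : 'rV[C]_N) i j k l : k != l ->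
  kron A (diag_mx d) (mxvec_index i k) (mxvec_index j l) = 0.
Proof. by move=> hk; rewrite kronE mxE (negbTE hk) mulr0n mulr0. Qed.

Lemma kron_diag1 A (d : 'rV[C]_N) i j l :
  kron A (diag_mx d) (mxvec_index i l) (mxvec_index j l) = A i j * d 0 l.
Proof. by rewrite kronE mxE eqxx mulr1n. Qed.

Lemma kron_diag_quad A (d : 'rV[C]_N) (w : 'cV[C]_(N * N)) :
  (adj w *m kron A (diag_mx d) *m w) 0 0 =
  \sum_l d 0 l * (adj (\col_i w (mxvec_index i l) 0) *m A *m
                    (\col_i w (mxvec_index i l) 0)) 0 0.
Proof.
rewrite mulmx_pair.
under eq_bigr do under eq_bigr do rewrite mulmx_pair.
under eq_bigr => j _ do under eq_bigr => l _ do under [X in X * _]eq_bigr => i _ do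
  (rewrite (@sum_only l); last by move=> k hk; rewrite kron_diag0 // mulr0).
rewrite exchange_big /=; apply: eq_bigr => l _.
rewrite [(_ *m _) 0 0]mxE big_distrr /=; apply: eq_bigr => j _.
rewrite [(_ *m _) 0 j]mxE !big_distrl /= big_distrr /=; apply: eq_bigr => i _.
rewrite kron_diag1 !mxE; ring.
Qed.

Lemma adj_delta_g m (x : 'I_m) :
  adj (delta_mx x 0 : 'cV[C]_m) = delta_mx 0 x.
Proof. by apply/matrixP => i j; rewrite !mxE rmorph_nat andbC. Qed.

Lemma dd_entry_g m (M : 'M[C]_m) x y :
  ((delta_mx 0 x : 'rV[C]_m) *m M *m (delta_mx y 0 : 'cV[C]_m)) 0 0 = M x y.
Proof. by rewrite -rowE -colE !mxE. Qed.

Lemma tC_adj m n (Q : 'M[C]_(m, n)) : map_mx Num.conj (Q^T) = adj Q.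
Proof. by apply/matrixP => i j; rewrite !mxE. Qed.

Lemma psd_kron A B : is_density A -> is_density B ->
  forall v : 'cV[C]_(N * N), 0 <= (adj v *m kron A B *m v) 0 0.
Proof.
case=> hA pA _; case=> hB pB _ v.
set Q := spectral.spectralmx B; set d := spectral.spectral_diag B.
have uQ : Q *m adj Q = 1%:M.
  by rewrite -tC_adj; apply/spectral.unitarymxP; apply: spectral.spectral_unitarymx.
have uQ' : adj Q *m Q = 1%:M by apply: mulmx1C.
have Bn : B \is spectral.normalmx.
  by apply/spectral.normalmxP; rewrite tC_adj hB.
have eB : B = adj Q *m diag_mx d *m Q.
  rewrite {1}(spectral.orthomx_spectralP Bn) -/Q -/d spectral.invmx_unitary ?tC_adj //.
  exact: spectral.spectral_unitarymx.
have eK : kron A B = kron 1%:M (adj Q) *m kron A (diag_mx d) *m kron 1%:M Q.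
  by rewrite eB !kron_mul mul1mx mulmx1.
have -> : adj v *m kron A B *m v =
   adj (kron 1%:M Q *m v) *m kron A (diag_mx d) *m (kron 1%:M Q *m v).
  by rewrite eK adj_mul adj_kron adj1 !mulmxA.
rewrite kron_diag_quad; apply: sumr_ge0 => l _; apply: mulr_ge0; last exact: pA.
have eD : diag_mx d = Q *m B *m adj Q.
  by rewrite eB !mulmxA uQ mul1mx -mulmxA uQ mulmx1.
have -> : d 0 l = diag_mx d l l by rewrite mxE eqxx mulr1n.
rewrite eD -(dd_entry_g (Q *m B *m adj Q) l l).
have -> : (delta_mx 0 l : 'rV[C]_N) *m (Q *m B *m adj Q) *m (delta_mx l 0 : 'cV[C]_N) =
   adj (adj Q *m (delta_mx l 0 : 'cV[C]_N)) *m B *m (adj Q *m delta_mx l 0).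
  by rewrite adj_mul adjK adj_delta_g !mulmxA.
exact: pB.
Qed.

Lemma kron_density A B : is_density A -> is_density B -> is_density (kron A B).
Proof.
move=> dA dB; split.
- by rewrite adj_kron; case: dA => -> _ _; case: dB => -> _ _.
- exact: psd_kron.
- by rewrite tr_kron; case: dA => _ _ ->; case: dB => _ _ ->; rewrite mulr1.
Qed.
End S.

Unset Implicit Arguments.
Local Open Scope classical_set_scope.

Theorem proposition4p1 (R : realType) (N n : nat)
  (p : 'I_n -> R) (U : 'I_n -> 'M[R[i]]_N)
  (hp : forall i, 0 <= p i) (hsum : \sum_(i < n) p i = 1)
  (hU : forall i, unitary (U i))
  (rhoA rhoB : 'M[R[i]]_N)
  (hA : is_density rhoA) (hB : is_density rhoB) :
  TQ (mixed_unitary p U rhoA) (mixed_unitary p U rhoB) <= TQ rhoA rhoB.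
Proof.
rewrite /TQ.
have lbL : lbound [set complex.Re (\tr (CQ R N *m rhoAB)) | rhoAB in
   couplings (mixed_unitary p U rhoA) (mixed_unitary p U rhoB)] 0.
  by move=> x [rho [hd _] <-]; exact: tr_CQ_ge0.
apply: lb_le_inf.
  exists (complex.Re (\tr (CQ R N *m kron rhoA rhoB))).
  exists (kron rhoA rhoB) => //; split; first exact: kron_density.
  rewrite ptB_kron ptA_kron.
  by case: hA => _ _ ->; case: hB => _ _ ->; rewrite !scale1r.
move=> x [rho [hd [hpb hpa]] <-].
rewrite -(Phi_CQ hsum hU rho).
apply: (ge_inf (ex_intro _ 0 lbL)).
exists (Phi p U rho) => //; split; first exact: Phi_density.
by rewrite Phi_ptB // Phi_ptA // hpb hpa.
Qed.
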